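(* Let $X$ be a nonempty set of order $n \ge 3$, and let $NG$ be an NG-group on $X$ with associated directed multigraph $(NG)_{dig}$. Then $$\sum_{v \in X} \rho(v) \le 2 \cdot n!.$$
   Context: An NG-group on a set $X$ is a set of maps $X \to X$ that forms a group under composition of functions and is not contained in the symmetric group $\mathrm{Sym}(X)$. The directed multigraph $(NG)_{dig}$ has vertex set $X$. For every $f \in NG$ and every $x \in X$ there is one arc from $x$ to $f(x)$; this arc is a loop when $f(x) = x$. Arcs coming from different maps are distinct. The degree of a vertex is $\rho(v) = \rho^+(v) + \rho^-(v)$, the sum of its out-degree and its in-degree. A loop contributes $1$ to each. *)

(* Defs.v *)
From mathcomp Require Import all_boot.
Set Implicit Arguments. Unset Strict Implicit. Unset Printing Implicit Defensive.

Definition fcomp (X : finType) (f g : {ffun X -> X}) : {ffun X -> X} :=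
  [ffun x => f (g x)].

(* S forms a group under composition of functions: closed under composition
   (associativity is automatic), has an identity element e in S (not
   necessarily the identity map), and every element has an inverse in S. *)
Definition is_comp_group (X : finType) (S : {set {ffun X -> X}}) : Prop :=
  (forall f g, f \in S -> g \in S -> fcomp f g \in S) /\
  exists2 e, e \in S &
    (forall f, f \in S -> fcomp e f = f /\ fcomp f e = f) /\
    (forall f, f \in S -> exists2 g, g \in S & fcomp f g = e /\ fcomp g f = e).

Definition NG_group (X : finType) (S : {set {ffun X -> X}}) : Prop :=
  is_comp_group S /\ exists2 f, f \in S & ~~ injectiveb f.

(* Arcs of (NG)_dig: one arc (f, x) from x to f x for each f in NG, x in X. *)
Definition arcs (X : finType) (S : {set {ffun X -> X}}) : {set {ffun X -> X} * X} :=
  [set a | a.1 \in S].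

Definition outdeg (X : finType) (S : {set {ffun X -> X}}) (v : X) : nat :=
  #|[set a in arcs S | a.2 == v]|.

Definition indeg (X : finType) (S : {set {ffun X -> X}}) (v : X) : nat :=
  #|[set a in arcs S | a.1 a.2 == v]|.

Definition degree (X : finType) (S : {set {ffun X -> X}}) (v : X) : nat :=
  outdeg S v + indeg S v.

(* Main.v *)
Require Import Defs.
From mathcomp Require Import all_boot.
From mathcomp Require Import all_fingroup.

Lemma sum_fiber (T X : finType) (A : {set T}) (g : T -> X) :
  \sum_(v : X) #|[set a in A | g a == v]| = #|A|.
Proof.
under eq_bigr => v _ do rewrite -sum1dep_card.
rewrite (exchange_big_dep predT) //=.
rewrite [RHS]cardE -sum1_size big_enum /=.
rewrite [RHS]big_mkcond; apply: eq_bigr => a _ /=.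
case: ifP => aA /=; last by rewrite big_pred0.
rewrite (bigD1 (g a)) //= big1 ?addn0 //.
by move=> v /andP[/eqP -> ]; rewrite eqxx.
Qed.

Lemma card_arcs (X : finType) (S : {set {ffun X -> X}}) :
  #|arcs S| = #|S| * #|X|.
Proof.
rewrite -cardsT -cardsX; apply: eq_card => a.
by rewrite /arcs !inE andbT.
Qed.

Lemma sum_degree (X : finType) (S : {set {ffun X -> X}}) :
  \sum_(v : X) degree S v = 2 * (#|S| * #|X|).
Proof.
rewrite /degree big_split /= /outdeg /indeg.
rewrite (@sum_fiber _ _ _ (fun a : {ffun X -> X} * X => a.2)) (@sum_fiber _ _ _ (fun a : {ffun X -> X} * X => a.1 a.2)).
by rewrite card_arcs mul2n addnn.
Qed.

Lemma NG_card (X : finType) (S : {set {ffun X -> X}}) :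
  NG_group S -> #|S| <= (#|X|.-1)`!.
Proof.
case=> [[Hc [e eS [He Hinv]]] [f0 f0S f0ni]].
have ee : forall x, e (e x) = e x.
  by move=> x; have [H _] := He e eS; have := congr1 (fun h : {ffun X -> X} => h x) H; rewrite ffunE.
have eL : forall f x, f \in S -> e (f x) = f x.
  by move=> f x fS; have [H _] := He f fS; have := congr1 (fun h : {ffun X -> X} => h x) H; rewrite ffunE.
have eR : forall f x, f \in S -> f (e x) = f x.
  by move=> f x fS; have [_ H] := He f fS; have := congr1 (fun h : {ffun X -> X} => h x) H; rewrite ffunE.
pose I := [set e x | x in [set: X]].
have inI : forall x, (x \in I) = (e x == x).
  move=> x; apply/imsetP/eqP => [[y _ ->]|<-]; first by rewrite ee.
  by exists x; rewrite ?inE.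
pose ext (f : {ffun X -> X}) := [ffun x => if x \in I then f x else x].
have ext_inj : forall f, f \in S -> injective (ext f).
  move=> f fS x y; rewrite !ffunE.
  have fI : forall z, f z \in I by move=> z; rewrite inI eL.
  have [g gS [_ Hgf]] := Hinv f fS.
  have gf : forall z, z \in I -> g (f z) = z.
    move=> z; rewrite inI => /eqP {2}<-.
    by have := congr1 (fun h : {ffun X -> X} => h z) Hgf; rewrite ffunE.
  case: ifP => xI; case: ifP => yI.
  - by move=> h; rewrite -(gf x xI) -(gf y yI) h.
  - by move=> h; move: yI; rewrite -h fI.
  - by move=> h; move: xI; rewrite h fI.
  - by [].
have extS : {in S &, injective ext}.
  move=> f1 f2 f1S f2S h; apply/ffunP => x.
  have exI : e x \in I by rewrite inI ee.
  have := congr1 (fun h : {ffun X -> X} => h (e x)) h; rewrite !ffunE exI.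
  by rewrite !eR.
have step1 : #|S| <= #|I|`!.
  rewrite -(card_in_imset extS) -card_perm.
  apply: leq_trans (leq_imset_card (@pval X) (perm_on I)).
  apply: subset_leq_card; apply/subsetP => _ /imsetP[f fS ->].
  apply/imsetP; exists (perm (ext_inj f fS)).
    apply/subsetP => x; rewrite inE permE ffunE.
    by case: ifP => // _; rewrite eqxx.
  by apply/ffunP => x; by rewrite pvalE permE.
have step2 : #|I| < #|X|.
  rewrite ltn_neqAle -cardsT subset_leq_card ?subsetT // andbT.
  apply/negP => /imset_injP einj.
  have eid : forall x, e x = x.
    by move=> x; apply: einj; rewrite ?inE // ee.
  move/injectiveP: f0ni; apply => x y h.
  have [g gS [_ Hgf]] := Hinv f0 f0S.
  have H z : g (f0 z) = z by have := congr1 (fun h : {ffun X -> X} => h z) Hgf; rewrite !ffunE eid.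
  by rewrite -(H x) -(H y) h.
apply: leq_trans step1 _; apply: leq_fact.
by rewrite -ltnS; case: #|X| step2 => //.
Qed.

Theorem mainTheorem4 (X : finType) (n : nat) (NG : {set {ffun X -> X}}) :
  #|X| = n -> 3 <= n -> NG_group NG ->
  \sum_(v : X) degree NG v <= 2 * n`!.
Proof.
move=> hX hn hNG; rewrite sum_degree leq_mul2l /=.
have := @NG_card _ _ hNG; rewrite hX.
case: n hX hn => // n _ _ h.
by rewrite factS [n.+1 * _]mulnC leq_mul2r h orbT.
Qed.
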